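(* Let $S$ be a finite collection of squares of sizes $d_i\times d_i$, where each $d_i$ is a power of two. Then the squares of $S$ can be placed axis-parallel in the plane without overlapping so that they fully cover an axis-parallel square of side length at least $\frac12\sqrt{\sum_i d_i^2}$. *)

(* Defs.v *)
From Stdlib Require Import Reals Lra ZArith.
Open Scope R_scope.

Definition side (k : Z) : R := powerRZ 2 k.

Definition closed_sq (x y d : R) (p : R * R) : Prop :=
  x <= fst p <= x + d /\ y <= snd p <= y + d.

Definition open_sq (x y d : R) (p : R * R) : Prop :=
  x < fst p < x + d /\ y < snd p < y + d.

Fixpoint sum_lt (n : nat) (f : nat -> R) : R :=
  match n with
  | O => 0
  | S m => sum_lt m f + f m
  end.

(* Main.v *)
Require Import Defs.
From Stdlib Require Import Reals ZArith List Lia Lra.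
Open Scope R_scope.

Lemma side_pos k : 0 < side k.
Proof. unfold side; apply powerRZ_lt; lra. Qed.

Lemma side_succ k : side (k + 1) = 2 * side k.
Proof. unfold side; rewrite powerRZ_add by lra; simpl; lra. Qed.

Lemma side_mono k k' : (k <= k')%Z -> side k <= side k'.
Proof.
  intros H. replace k' with (k + Z.of_nat (Z.to_nat (k' - k)))%Z by lia.
  unfold side; rewrite powerRZ_add by lra.
  rewrite <- pow_powerRZ.
  assert (0 < powerRZ 2 k) by (apply powerRZ_lt; lra).
  assert (1 <= 2 ^ Z.to_nat (k' - k)) by (apply pow_R1_Rle; lra).
  nra.
Qed.

Lemma side_sq_mono k k' : (k <= k')%Z -> side k ^ 2 <= side k' ^ 2.
Proof. intros H; pose proof (side_mono _ _ H); pose proof (side_pos k); nra. Qed.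

Lemma side_sq_succ k : side (k + 1) ^ 2 = 4 * side k ^ 2.
Proof. rewrite side_succ; ring. Qed.

Fixpoint sumL (e : nat -> Z) (l : list nat) : R :=
  match l with nil => 0 | i :: t => side (e i) ^ 2 + sumL e t end.

Lemma sumL_app e l1 l2 : sumL e (l1 ++ l2) = sumL e l1 + sumL e l2.
Proof. induction l1; simpl; [lra|rewrite IHl1; lra]. Qed.

Lemma sumL_filter e (f : nat -> bool) l :
  sumL e l = sumL e (filter f l) + sumL e (filter (fun x => negb (f x)) l).
Proof. induction l; simpl; [lra|]. destruct (f a); simpl; rewrite IHl; lra. Qed.

Lemma sumL_ext e e' l : (forall i, In i l -> e i = e' i) -> sumL e l = sumL e' l.
Proof. induction l; simpl; intros H; [lra|]. rewrite H by auto. rewrite IHl; auto. Qed.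

Lemma sumL_const e m l : (forall i, In i l -> e i = m) -> sumL e l = INR (length l) * side m ^ 2.
Proof.
  induction l; simpl; intros H; [lra|]. rewrite H by auto. rewrite IHl by auto.
  destruct (length l); simpl; ring.
Qed.

Lemma sum_lt_seq n f : sum_lt n f = fold_right (fun i r => f i + r) 0 (seq 0 n).
Proof.
  induction n; [reflexivity|]. cbn [sum_lt]. rewrite seq_S, fold_right_app; simpl.
  rewrite IHn. clear IHn. generalize (seq 0 n). induction l; simpl; [lra|]. rewrite <- IHl; lra.
Qed.

Lemma min_exists (e : nat -> Z) l : l <> nil ->
  exists i, In i l /\ forall j, In j l -> (e i <= e j)%Z.
Proof.
  induction l as [|a t IH]; intros H; [congruence|].
  destruct t as [|b t].
  - exists a; split; [left; auto|]. intros j [->|[]]; lia.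
  - destruct IH as [i [Hi Hm]]; [discriminate|].
    destruct (Z.le_gt_cases (e a) (e i)).
    + exists a; split; [left; auto|]. intros j [->|Hj]; [lia|]. specialize (Hm j Hj); lia.
    + exists i; split; [right; auto|]. intros j [->|Hj]; [lia|auto].
Qed.

Lemma in_le_max i l : In i l -> (i <= list_max l)%nat.
Proof.
  intros H. assert (list_max l <= list_max l)%nat by lia.
  apply list_max_le in H0. rewrite Forall_forall in H0. auto.
Qed.

Definition Good (e : nat -> Z) (l : list nat) : Prop :=
 exists (x y : nat -> R) (K : Z) (a b : R),
  (forall i, In i l -> 0 <= x i) /\
  (forall i j, In i l -> In j l -> i <> j -> forall p,
      ~ (open_sq (x i) (y i) (side (e i)) p /\ open_sq (x j) (y j) (side (e j)) p)) /\
  (exists i, In i l /\ sumL e l + side (e i) ^ 2 <= 4 * side K ^ 2) /\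
  (forall p, open_sq a b (side K) p -> exists i, In i l /\ closed_sq (x i) (y i) (side (e i)) p).

Lemma disj_row (i j : nat) s (p1 : R) : i <> j -> 0 < s ->
  ~ (INR i * s < p1 < INR i * s + s /\ INR j * s < p1 < INR j * s + s).
Proof.
  intros Hij Hs [H1 H2].
  destruct (Nat.lt_gt_cases i j) as [[Hl|Hl] _]; [exact Hij| |].
  - apply le_INR in Hl; rewrite S_INR in Hl; nra.
  - apply le_INR in Hl; rewrite S_INR in Hl; nra.
Qed.

Lemma small_case (e : nat -> Z) l m i0 :
  NoDup l -> In i0 l -> e i0 = m -> (forall j, In j l -> (m <= e j)%Z) ->
  (length (filter (fun i => Z.eqb (e i) m) l) <= 3)%nat ->
  (filter (fun i => negb (Z.eqb (e i) m)) l = nil \/ Good e (filter (fun i => negb (Z.eqb (e i) m)) l)) ->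
  Good e l.
Proof.
  intros Hnd Hi0 Hm Hmin Hlen HR.
  set (Lm := filter (fun i => Z.eqb (e i) m) l) in *.
  set (Rr := filter (fun i => negb (Z.eqb (e i) m)) l) in *.
  assert (HinL : forall i, In i Lm <-> In i l /\ e i = m).
  { intros i; unfold Lm; rewrite filter_In, Z.eqb_eq; tauto. }
  assert (HinR : forall i, In i Rr <-> In i l /\ e i <> m).
  { intros i; unfold Rr; rewrite filter_In, Bool.negb_true_iff, Z.eqb_neq; tauto. }
  assert (Hsum : sumL e l = sumL e Lm + sumL e Rr) by apply sumL_filter.
  assert (HsL : sumL e Lm = INR (length Lm) * side m ^ 2).
  { apply sumL_const. intros i Hi; apply HinL; auto. }
  assert (HlL : INR (length Lm) <= 3).
  { apply le_INR in Hlen; simpl in Hlen; lra. }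
  pose proof (side_pos m) as Hsp.
  destruct HR as [HR|HR].
  -
    assert (Hall : forall i, In i l -> e i = m).
    { intros i Hi. destruct (Z.eq_dec (e i) m); auto.
      assert (In i Rr) by (apply HinR; auto). rewrite HR in H; destruct H. }
    exists (fun i => INR i * side m), (fun _ => 0), m, (INR i0 * side m), 0.
    split; [|split; [|split]].
    + intros i _. pose proof (pos_INR i); nra.
    + intros i j Hi Hj Hij [p1 p2] [[H1 _] [H2 _]]. simpl in *.
      rewrite (Hall i Hi), (Hall j Hj) in *.
      apply (disj_row i j (side m) p1 Hij Hsp); tauto.
    + exists i0; split; auto. rewrite Hsum, HsL, HR, Hm. simpl. nra.
    + intros p Hp. exists i0; split; auto. rewrite Hm. unfold open_sq, closed_sq in *; lra.
  - destruct HR as (x' & y' & K & a & b & Hx0 & Hdisj & (j & Hj & HsR) & Hcov).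
    set (sh := INR (S (list_max l)) * side m).
    assert (Hsh : 0 <= sh) by (unfold sh; pose proof (pos_INR (S (list_max l))); nra).
    assert (HiB : forall i, In i l -> INR i * side m + side m <= sh).
    { intros i Hi. unfold sh. pose proof (in_le_max _ _ Hi).
      apply le_n_S, le_INR in H. rewrite S_INR in H. nra. }
    exists (fun i => if Z.eqb (e i) m then INR i * side m else x' i + sh),
           (fun i => if Z.eqb (e i) m then 0 else y' i), K, (a + sh), b.
    split; [|split; [|split]].
    + intros i Hi. destruct (Z.eqb_spec (e i) m).
      * pose proof (pos_INR i); nra.
      * assert (In i Rr) by (apply HinR; auto). specialize (Hx0 i H). lra.
    + intros i k Hi Hk Hik [p1 p2].
      destruct (Z.eqb_spec (e i) m) as [Ei|Ei]; destruct (Z.eqb_spec (e k) m) as [Ek|Ek];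
        unfold open_sq; simpl; rewrite ?Ei, ?Ek.
      * intros [[H1 _] [H2 _]]. apply (disj_row i k (side m) p1 Hik Hsp); tauto.
      * assert (In k Rr) by (apply HinR; auto). specialize (Hx0 k H).
        specialize (HiB i Hi). lra.
      * assert (In i Rr) by (apply HinR; auto). specialize (Hx0 i H).
        specialize (HiB k Hk). lra.
      * intros [[H1 H2] [H3 H4]].
        apply (Hdisj i k ltac:(apply HinR; auto) ltac:(apply HinR; auto) Hik (p1 - sh, p2)).
        unfold open_sq; simpl; lra.
    + exists i0; split; auto. rewrite Hsum, HsL, Hm.
      apply HinR in Hj as [Hjl Hjm].
      assert (Hle : (m + 1 <= e j)%Z) by (specialize (Hmin j Hjl); lia).
      apply side_sq_mono in Hle. rewrite side_sq_succ in Hle. nra.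
    + intros [p1 p2] Hp.
      destruct (Hcov (p1 - sh, p2)) as (k & Hk & Hc).
      { unfold open_sq in *; simpl in *; lra. }
      apply HinR in Hk as [Hkl Hkm]. exists k; split; auto.
      destruct (Z.eqb_spec (e k) m); [contradiction|].
      unfold closed_sq in *; simpl in *; lra.
Qed.

Ltac eqs := repeat match goal with |- context [Nat.eqb ?a ?b] =>
   destruct (Nat.eqb_spec a b); try congruence end.

Lemma merge_case (e : nat -> Z) l m i1 i2 i3 i4 L2 :
  NoDup l -> (forall j, In j l -> (m <= e j)%Z) ->
  filter (fun i => Z.eqb (e i) m) l = i1 :: i2 :: i3 :: i4 :: L2 ->
  Good (fun i => if Nat.eqb i (S (list_max l)) then (m + 1)%Z else e i)
       (S (list_max l) :: L2 ++ filter (fun i => negb (Z.eqb (e i) m)) l) ->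
  Good e l.
Proof.
  intros Hnd Hmin HL HG.
  set (f := S (list_max l)) in *.
  set (e' := fun i => if Nat.eqb i f then (m + 1)%Z else e i) in *.
  set (Rr := filter (fun i => negb (Z.eqb (e i) m)) l) in *.
  assert (HinL : forall i, In i (i1 :: i2 :: i3 :: i4 :: L2) <-> In i l /\ e i = m).
  { intros i; rewrite <- HL, filter_In, Z.eqb_eq; tauto. }
  assert (HinR : forall i, In i Rr <-> In i l /\ e i <> m).
  { intros i; unfold Rr; rewrite filter_In, Bool.negb_true_iff, Z.eqb_neq; tauto. }
  assert (HndL : NoDup (i1 :: i2 :: i3 :: i4 :: L2)) by (rewrite <- HL; apply NoDup_filter; auto).
  assert (Hfl : forall i, In i l -> i <> f).
  { intros i Hi. pose proof (in_le_max _ _ Hi). unfold f; lia. }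
  assert (He' : forall i, In i l -> e' i = e i).
  { intros i Hi. unfold e'. destruct (Nat.eqb_spec i f); auto. exfalso; apply (Hfl i Hi); auto. }
  assert (He'f : e' f = (m + 1)%Z) by (unfold e'; rewrite Nat.eqb_refl; auto).
  assert (Em : forall i, In i (i1 :: i2 :: i3 :: i4 :: L2) -> e i = m /\ In i l).
  { intros i Hi; apply HinL in Hi; tauto. }
  destruct (Em i1 ltac:(simpl; tauto)) as [E1 I1].
  destruct (Em i2 ltac:(simpl; tauto)) as [E2 I2].
  destruct (Em i3 ltac:(simpl; tauto)) as [E3 I3].
  destruct (Em i4 ltac:(simpl; tauto)) as [E4 I4].
  apply NoDup_cons_iff in HndL as [N1 HndL1].
  apply NoDup_cons_iff in HndL1 as [N2 HndL2].
  apply NoDup_cons_iff in HndL2 as [N3 HndL3].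
  apply NoDup_cons_iff in HndL3 as [N4 HndL4].
  simpl in N1, N2, N3.
  assert (D12 : i1 <> i2) by (intro; subst; tauto). assert (D13 : i1 <> i3) by (intro; subst; tauto).
  assert (D14 : i1 <> i4) by (intro; subst; tauto). assert (D23 : i2 <> i3) by (intro; subst; tauto).
  assert (D24 : i2 <> i4) by (intro; subst; tauto). assert (D34 : i3 <> i4) by (intro; subst; tauto).
  assert (Hcls : forall i, In i l ->
     (i = i1 \/ i = i2 \/ i = i3 \/ i = i4) \/
     (In i (L2 ++ Rr) /\ i <> i1 /\ i <> i2 /\ i <> i3 /\ i <> i4)).
  { intros i Hi. destruct (Z.eq_dec (e i) m) as [Eq|Ne].
    - assert (Hin : In i (i1 :: i2 :: i3 :: i4 :: L2)) by (apply HinL; auto).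
      destruct Hin as [<-|[<-|[<-|[<-|Hin]]]]; try tauto.
      right. split; [apply in_or_app; auto|].
      repeat split; intros ->; tauto.
    - right. split; [apply in_or_app; right; apply HinR; auto|].
      repeat split; intros ->; congruence. }
  assert (Hsub : forall i, In i (L2 ++ Rr) -> In i l).
  { intros i Hi. apply in_app_or in Hi as [Hi|Hi].
    - apply HinL; simpl; tauto.
    - apply HinR in Hi; tauto. }
  destruct HG as (x' & y' & K & a & b & Hx0 & Hdisj & (j & Hj & Hsum) & Hcov).
  set (s := side m).
  pose proof (side_pos m) as Hs. fold s in Hs.
  assert (Hsf : side (e' f) = 2 * s) by (rewrite He'f, side_succ; auto).
  set (x := fun i => if Nat.eqb i i1 then x' f else if Nat.eqb i i2 then x' f + s
                     else if Nat.eqb i i3 then x' f else if Nat.eqb i i4 then x' f + s else x' i).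
  set (y := fun i => if Nat.eqb i i1 then y' f else if Nat.eqb i i2 then y' f
                     else if Nat.eqb i i3 then y' f + s else if Nat.eqb i i4 then y' f + s else y' i).
  assert (X1 : x i1 = x' f /\ y i1 = y' f) by (unfold x, y; eqs; auto).
  assert (X2 : x i2 = x' f + s /\ y i2 = y' f) by (unfold x, y; eqs; auto).
  assert (X3 : x i3 = x' f /\ y i3 = y' f + s) by (unfold x, y; eqs; auto).
  assert (X4 : x i4 = x' f + s /\ y i4 = y' f + s) by (unfold x, y; eqs; auto).
  assert (XO : forall i, i <> i1 -> i <> i2 -> i <> i3 -> i <> i4 -> x i = x' i /\ y i = y' i)
    by (intros i ? ? ? ?; unfold x, y; eqs; auto).
  assert (Inf : In f (f :: L2 ++ Rr)) by (left; auto).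
  assert (Ino : forall i, In i (L2 ++ Rr) -> In i (f :: L2 ++ Rr)) by (intros; right; auto).
  assert (Hq : forall i, i = i1 \/ i = i2 \/ i = i3 \/ i = i4 ->
     e i = m /\ forall p, open_sq (x i) (y i) (side (e i)) p -> open_sq (x' f) (y' f) (side (e' f)) p).
  { intros i Hi. rewrite Hsf.
    destruct Hi as [->|[->|[->| ->]]]; split; auto;
      [destruct X1 as [-> ->]|destruct X2 as [-> ->]|destruct X3 as [-> ->]|destruct X4 as [-> ->]];
      intros p; fold s; rewrite ?E1, ?E2, ?E3, ?E4; fold s; unfold open_sq; lra. }
  exists x, y, K, a, b.
  split; [|split; [|split]].
  - intros i Hi. pose proof (Hx0 f Inf).
    destruct (Hcls i Hi) as [[->|[->|[->| ->]]]|(Hi2 & ? & ? & ? & ?)];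
      [destruct X1 as [-> _]|destruct X2 as [-> _]|destruct X3 as [-> _]|destruct X4 as [-> _]|];
      try lra.
    rewrite (proj1 (XO i ltac:(auto) ltac:(auto) ltac:(auto) ltac:(auto))). apply Hx0; auto.
  - intros i k Hi Hk Hik p [Hpi Hpk].
    destruct (Hcls i Hi) as [Qi|(Hi2 & Ni)]; destruct (Hcls k Hk) as [Qk|(Hk2 & Nk)].
    + rewrite (proj1 (Hq i Qi)) in Hpi. rewrite (proj1 (Hq k Qk)) in Hpk. fold s in Hpi, Hpk.
      destruct p as [p1 p2]. unfold open_sq in *; simpl in *.
      destruct Qi as [->|[->|[->| ->]]]; destruct Qk as [->|[->|[->| ->]]];
        try congruence;
        rewrite ?(proj1 X1), ?(proj2 X1), ?(proj1 X2), ?(proj2 X2),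
           ?(proj1 X3), ?(proj2 X3), ?(proj1 X4), ?(proj2 X4) in *; lra.
    + apply (proj2 (Hq i Qi)) in Hpi.
      destruct Nk as (? & ? & ? & ?). destruct (XO k) as [Ex Ey]; auto.
      rewrite Ex, Ey, <- (He' k Hk) in Hpk.
      apply (Hdisj f k Inf (Ino k Hk2) (not_eq_sym (Hfl k Hk)) p); auto.
    + apply (proj2 (Hq k Qk)) in Hpk.
      destruct Ni as (? & ? & ? & ?). destruct (XO i) as [Ex Ey]; auto.
      rewrite Ex, Ey, <- (He' i Hi) in Hpi.
      apply (Hdisj f i Inf (Ino i Hi2) (not_eq_sym (Hfl i Hi)) p); auto.
    + destruct Ni as (? & ? & ? & ?). destruct (XO i) as [Ex Ey]; auto.
      rewrite Ex, Ey, <- (He' i Hi) in Hpi.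
      destruct Nk as (? & ? & ? & ?). destruct (XO k) as [Ex' Ey']; auto.
      rewrite Ex', Ey', <- (He' k Hk) in Hpk.
      apply (Hdisj i k (Ino i Hi2) (Ino k Hk2) Hik p); auto.
  - exists i1; split; auto.
    assert (HsumE : sumL e l = 4 * s ^ 2 + sumL e (L2 ++ Rr)).
    { rewrite (sumL_filter e (fun i => Z.eqb (e i) m) l), HL. fold Rr.
      rewrite sumL_app. simpl. rewrite E1, E2, E3, E4. fold s. ring. }
    assert (HsumE' : sumL e' (f :: L2 ++ Rr) = 4 * s ^ 2 + sumL e (L2 ++ Rr)).
    { cbn [sumL]. rewrite He'f, side_sq_succ. fold s.
      rewrite (sumL_ext e' e); [ring|]. intros i Hi; apply He', Hsub; auto. }
    assert (Hj' : (m <= e' j)%Z).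
    { destruct Hj as [<-|Hj]; [rewrite He'f; lia|].
      rewrite He' by auto. apply Hmin, Hsub; auto. }
    apply side_sq_mono in Hj'. rewrite E1. fold s in Hj' |- *. lra.
  - intros p Hp. destruct (Hcov p Hp) as (k & Hk & Hc).
    destruct Hk as [<-|Hk].
    + rewrite Hsf in Hc. destruct p as [p1 p2]. unfold closed_sq in *; simpl in *.
      destruct (Rle_lt_dec p1 (x' f + s)); destruct (Rle_lt_dec p2 (y' f + s)).
      * exists i1; split; auto. rewrite E1, (proj1 X1), (proj2 X1); fold s; simpl; lra.
      * exists i3; split; auto. rewrite E3, (proj1 X3), (proj2 X3); fold s; simpl; lra.
      * exists i2; split; auto. rewrite E2, (proj1 X2), (proj2 X2); fold s; simpl; lra.
      * exists i4; split; auto. rewrite E4, (proj1 X4), (proj2 X4); fold s; simpl; lra.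
    + exists k. pose proof (Hsub k Hk) as Hkl. split; auto.
      destruct (Hcls k Hkl) as [Q|(_ & ? & ? & ? & ?)].
      * exfalso. apply in_app_or in Hk as [Hk|Hk].
        -- destruct Q as [->|[->|[->| ->]]]; simpl in *; tauto.
        -- apply HinR in Hk. destruct Q as [->|[->|[->| ->]]]; tauto.
      * destruct (XO k) as [Ex Ey]; auto. rewrite Ex, Ey, <- (He' k Hkl). auto.
Qed.

Lemma gen N : forall (e : nat -> Z) l, (length l <= N)%nat -> NoDup l -> l <> nil -> Good e l.
Proof.
  induction N as [|N IH]; intros e l Hlen Hnd Hne.
  { destruct l; [congruence|simpl in Hlen; lia]. }
  destruct (min_exists e l Hne) as [i0 [Hi0 Hmin]].
  set (m := e i0) in *.
  pose proof (filter_length (fun i => Z.eqb (e i) m) l) as Hfl.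
  assert (Hi0L : In i0 (filter (fun i => Z.eqb (e i) m) l)).
  { apply filter_In; split; auto. apply Z.eqb_refl. }
  destruct (filter (fun i => Z.eqb (e i) m) l) as [|i1 [|i2 [|i3 [|i4 L2]]]] eqn:HL;
    try (simpl in Hi0L; contradiction).
  4: { apply (merge_case e l m i1 i2 i3 i4 L2 Hnd Hmin HL).
       apply IH.
       - simpl in *. rewrite length_app. lia.
       - assert (Hneq : forall i, In i (L2 ++ filter (fun i => negb (Z.eqb (e i) m)) l) -> In i l).
         { intros i Hi. apply in_app_or in Hi as [Hi|Hi].
           - assert (In i (filter (fun i => Z.eqb (e i) m) l)) by (rewrite HL; simpl; tauto).
             apply filter_In in H; tauto.
           - apply filter_In in Hi; tauto. }
         constructor.
         + intros Hin. apply Hneq, in_le_max in Hin. lia.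
         + apply NoDup_app.
           * assert (Hn : NoDup (filter (fun i => Z.eqb (e i) m) l)) by (apply NoDup_filter; auto).
             rewrite HL in Hn. do 4 (apply NoDup_cons_iff in Hn as [_ Hn]). auto.
           * apply NoDup_filter; auto.
           * intros i Hi Hi'. apply filter_In in Hi' as [_ Hi'].
             assert (In i (filter (fun i => Z.eqb (e i) m) l)) by (rewrite HL; simpl; tauto).
             apply filter_In in H as [_ H]. rewrite H in Hi'. discriminate.
       - discriminate. }
  all: apply (small_case e l m i0 Hnd Hi0 eq_refl Hmin); [rewrite HL; simpl; lia|];
    (destruct (filter (fun i => negb (Z.eqb (e i) m)) l) as [|r rs] eqn:HR; [left; auto|right]);
    rewrite <- HR; apply IH; [rewrite HR in *; simpl in *; lia|apply NoDup_filter; auto|rewrite HR; discriminate].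
Qed.

Theorem lemma5 (n : nat) (e : nat -> Z) :
  exists (x y : nat -> R) (a b s : R),
    (forall i j : nat, (i < n)%nat -> (j < n)%nat -> i <> j ->
       forall p : R * R,
         ~ (open_sq (x i) (y i) (side (e i)) p /\
            open_sq (x j) (y j) (side (e j)) p)) /\
    s >= / 2 * sqrt (sum_lt n (fun i => side (e i) ^ 2)) /\
    (forall p : R * R, open_sq a b s p ->
       exists i : nat, (i < n)%nat /\ closed_sq (x i) (y i) (side (e i)) p).
Proof.
  destruct n as [|n].
  { exists (fun _ => 0), (fun _ => 0), 0, 0, 0. split; [intros; lia|split].
    - simpl. rewrite sqrt_0. lra.
    - intros p Hp. unfold open_sq in Hp. lra. }
  destruct (gen (S n) e (seq 0 (S n))) as (x & y & K & a & b & _ & Hd & (j & _ & Hs) & Hc).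
  - rewrite length_seq; lia.
  - apply seq_NoDup.
  - simpl; discriminate.
  - exists x, y, a, b, (side K). split; [|split].
    + intros i k Hi Hk. apply Hd; apply in_seq; lia.
    + assert (Heq : sum_lt (S n) (fun i => side (e i) ^ 2) = sumL e (seq 0 (S n))).
      { rewrite sum_lt_seq. generalize (seq 0 (S n)). induction l as [|z l IHl]; [reflexivity|]. cbn [fold_right sumL]. rewrite <- IHl. reflexivity. }
      rewrite Heq. pose proof (side_pos K). pose proof (side_pos (e j)).
      assert (sqrt (sumL e (seq 0 (S n))) <= sqrt ((2 * side K) ^ 2)).
      { apply sqrt_le_1_alt. nra. }
      rewrite sqrt_pow2 in H1 by lra. lra.
    + intros p Hp. destruct (Hc p Hp) as (i & Hi & Hci). exists i; split; auto.
      apply in_seq in Hi; lia.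
Qed.
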